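(* Let $x,x',\ldots,x^{(r)}$ be $m$-tuples of indeterminates and let $f\in R[x,x',\ldots,x^{(r)}]^\wedge$. Define $f_*:R^m\to R$ by $f_*(a)=f(a,\delta a,\ldots,\delta^r a)$. If $f_*$ vanishes on a product of (nonempty) open balls in $R^m$, then $f_*(a)=0$ for all $a\in R^m$.
   Context: Let $p$ be an odd prime, $R$ the unique complete discrete valuation ring with maximal ideal $pR$ and residue field an algebraic closure of $\mathbb F_p$, with the $p$-adic metric; open balls are the sets $b+p^NR$. $\phi$ is the unique lift of Frobenius on $R$, $\delta a=(\phi(a)-a^p)/p$, applied componentwise on $R^m$. $\wedge$ denotes $p$-adic completion. *)

(* Defs.v *)
From mathcomp Require Import all_boot all_order all_algebra.
Set Implicit Arguments. Unset Strict Implicit. Unset Printing Implicit Defensive.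
Import Order.TTheory GRing.Theory Num.Theory.
Local Open Scope ring_scope.

Definition in_pow_ideal (R : comNzRingType) (p k : nat) (x : R) : Prop :=
  exists c : R, x = (p%:R) ^+ k * c.

(* R is (a model of) the unique complete DVR with maximal ideal pR and
   residue field an algebraic closure of F_p.  *)
Definition witt_ring (p : nat) (R : idomainType) : Prop :=
  (p%:R != 0 :> R) /\
  (~~ ((p%:R : R) \is a GRing.unit)) /\
  (forall a : R, a != 0 -> exists n : nat, exists u : R,
       u \is a GRing.unit /\ a = (p%:R) ^+ n * u) /\
  (forall u : nat -> R,
      (forall k, exists n0, forall n, (n0 <= n)%N -> in_pow_ideal p k (u n - u n0)) ->
      exists l : R, forall k, exists n0, forall n, (n0 <= n)%N ->
          in_pow_ideal p k (u n - l)) /\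
  (forall P : {poly R}, P \is monic -> (1 < size P)%N ->
      exists x : R, in_pow_ideal p 1 P.[x]) /\
  (* residue field is algebraic over F_p *)
  (forall a : R, exists n : nat, (0 < n)%N /\ in_pow_ideal p 1 (a ^+ (p ^ n) - a)).

Definition frob_lift (p : nat) (R : idomainType) (phi : {rmorphism R -> R}) :
  Prop := forall a : R, in_pow_ideal p 1 (phi a - a ^+ p).

(* delta a = (phi a - a^p)/p  (well-defined since R is a domain). *)
Definition is_delta (p : nat) (R : idomainType) (phi : R -> R) (delta : R -> R) :
  Prop := forall a : R, (p%:R) * delta a = phi a - a ^+ p.

Definition monom (r m : nat) := {ffun 'I_r.+1 * 'I_m -> nat}.

(* Elements of the p-adic completion R[x,x',...,x^{(r)}]^: coefficient
   families tending to 0 p-adically. *)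
Definition restricted (p : nat) (R : idomainType) (r m : nat)
  (f : monom r m -> R) : Prop :=
  forall k : nat, exists s : seq (monom r m),
    forall al, al \notin s -> in_pow_ideal p k (f al).

Definition monom_eval (R : idomainType) (r m : nat) (al : monom r m)
  (b : 'I_r.+1 * 'I_m -> R) : R :=
  \prod_(v : 'I_r.+1 * 'I_m) b v ^+ al v.

(* f(b) = v : the series sum_al f_al b^al converges p-adically
   (unconditionally) to v. *)
Definition eval_to (p : nat) (R : idomainType) (r m : nat)
  (f : monom r m -> R) (b : 'I_r.+1 * 'I_m -> R) (v : R) : Prop :=
  forall k : nat, exists s : seq (monom r m),
    forall t : seq (monom r m), uniq t -> {subset s <= t} ->
      in_pow_ideal p k (v - \sum_(al <- t) f al * monom_eval al b).

Definition jet (R : idomainType) (r m : nat) (delta : R -> R) (a : 'I_m -> R) :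
  'I_r.+1 * 'I_m -> R := fun v => iter v.1 delta (a v.2).

(* Main.v *)
Require Import Defs.
From mathcomp Require Import all_boot all_order all_algebra.
From mathcomp Require Import ring zify.
From mathcomp Require Import mpoly.
From Stdlib Require Import IndefiniteDescription.
Set Implicit Arguments. Unset Strict Implicit. Unset Printing Implicit Defensive.
Import Order.TTheory GRing.Theory Num.Theory.
Local Open Scope ring_scope.

Section Gen.
Variables (p : nat) (S : comNzRingType).
Local Notation ipi := (@in_pow_ideal S p).
Local Notation P := (p%:R : S).

Lemma ipi0 x : ipi 0 x. Proof. by exists x; rewrite expr0 mul1r. Qed.
Lemma ipi_zero k : ipi k 0. Proof. by exists 0; rewrite mulr0. Qed.
Lemma ipiD k x y : ipi k x -> ipi k y -> ipi k (x + y).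
Proof. by move=> [a ->] [b ->]; exists (a + b); rewrite mulrDr. Qed.
Lemma ipiN k x : ipi k x -> ipi k (- x).
Proof. by move=> [a ->]; exists (- a); rewrite mulrN. Qed.
Lemma ipiB k x y : ipi k x -> ipi k y -> ipi k (x - y).
Proof. by move=> hx hy; apply: ipiD => //; apply: ipiN. Qed.
Lemma ipiMl k x y : ipi k y -> ipi k (x * y).
Proof. by move=> [a ->]; exists (x * a); rewrite mulrCA. Qed.
Lemma ipiMr k x y : ipi k x -> ipi k (x * y).
Proof. by move=> hx; rewrite mulrC; apply: ipiMl. Qed.
Lemma ipiM a b x y : ipi a x -> ipi b y -> ipi (a + b) (x * y).
Proof.
by move=> [c ->] [d ->]; exists (c * d); rewrite exprD mulrACA.
Qed.
Lemma ipi_le a b x : (a <= b)%N -> ipi b x -> ipi a x.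
Proof.
move=> hab [c ->]; exists (P ^+ (b - a) * c).
by rewrite mulrA -exprD subnKC.
Qed.
Lemma ipiP k y : ipi k (P ^+ k * y). Proof. by exists y. Qed.
Lemma ipiPl a k y : (a <= k)%N -> ipi a (P ^+ k * y).
Proof. by move=> h; apply: (ipi_le h); apply: ipiP. Qed.
Lemma ipiMn k x n : ipi k x -> ipi k (x *+ n).
Proof. by move=> h; rewrite -mulr_natr; apply: ipiMr. Qed.
Lemma ipi_sumP k (I : Type) (s : seq I) (Q : pred I) (F : I -> S) :
  (forall i, Q i -> ipi k (F i)) -> ipi k (\sum_(i <- s | Q i) F i).
Proof.
move=> H; apply: (big_ind (ipi k)) => //; first exact: ipi_zero.
exact: ipiD.
Qed.
Lemma ipi_sum k (I : eqType) (s : seq I) (F : I -> S) :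
  (forall i, i \in s -> ipi k (F i)) -> ipi k (\sum_(i <- s) F i).
Proof.
move=> H; rewrite big_seq; apply: ipi_sumP => i; exact: H.
Qed.
Lemma ipiX a x e : ipi a x -> ipi (a * e) (x ^+ e).
Proof.
move=> h; elim: e => [|e IH]; first by rewrite muln0; apply: ipi0.
by rewrite exprS mulnS; apply: ipiM.
Qed.
Lemma ipiX1 a x e : (0 < e)%N -> ipi a x -> ipi a (x ^+ e).
Proof.
case: e => // e _ h; rewrite exprS -[a]addn0; apply: ipiM => //; exact: ipi0.
Qed.

Lemma ipiPX s y k : (0 < k)%N -> ipi s ((P ^+ s * y) ^+ k).
Proof.
move=> k0; rewrite exprMn -exprM; apply: ipiMr.
rewrite -[P ^+ _]mulr1; apply: ipiPl.
by rewrite -{1}(muln1 s) leq_mul2l k0 orbT.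
Qed.

Lemma binom_ipi s x y e : ipi s ((x + P ^+ s * y) ^+ e - x ^+ e).
Proof.
case: e => [|e]; first by rewrite !expr0 subrr; apply: ipi_zero.
rewrite exprDn big_ord_recl /= subn0 expr0 mulr1 bin0 mulr1n [X in X - _]addrC addrK.
apply: ipi_sum => i _; apply: ipiMn; apply: ipiMl.
by apply: ipiPX.
Qed.


Lemma ipi1P : ipi 1 P. Proof. by exists 1; rewrite expr1 mulr1. Qed.

Lemma eqmM k a b c d : ipi k (a - b) -> ipi k (c - d) -> ipi k (a * c - b * d).
Proof.
move=> h1 h2; have -> : a * c - b * d = a * (c - d) + (a - b) * d by ring.
by apply: ipiD; [apply: ipiMl | apply: ipiMr].
Qed.

Lemma eqmX k a b e : ipi k (a - b) -> ipi k (a ^+ e - b ^+ e).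
Proof.
move=> h; elim: e => [|e IH]; first by rewrite !expr0 subrr; apply: ipi_zero.
by rewrite !exprS; apply: eqmM.
Qed.

Lemma eqm_prod k (I : Type) (s : seq I) (F G : I -> S) :
  (forall i, ipi k (F i - G i)) -> ipi k (\prod_(i <- s) F i - \prod_(i <- s) G i).
Proof.
move=> H; elim: s => [|a s IH]; first by rewrite !big_nil subrr; apply: ipi_zero.
by rewrite !big_cons; apply: eqmM.
Qed.


Lemma frob_add (pp : prime p) x y : ipi 1 ((x + y) ^+ p - x ^+ p - y ^+ p).
Proof.
have p1 : (0 < p)%N by apply: prime_gt0.
rewrite exprDn (bigD1 ord0) //= (bigD1 ord_max) /=; last by rewrite -(inj_eq val_inj) /= -lt0n.
rewrite subn0 expr0 mulr1 bin0 mulr1n subnn expr0 mul1r binn mulr1n.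
have -> : forall a b c : S, a + (b + c) - a - b = c.
  by move=> a b c; ring.
apply: ipi_sumP => i /andP [h0 hm].
have hi : (0 < i < p)%N.
  rewrite lt0n; apply/andP; split; first by move: h0; apply: contra => /eqP e; apply/eqP; apply: val_inj.
  rewrite ltn_neqAle -ltnS ltn_ord andbT; move: hm; apply: contra => /eqP e; apply/eqP; apply: val_inj.
  by rewrite /= e.
case/dvdnP: (prime_dvd_bin pp hi) => q ->.
rewrite mulrnA -(mulr_natr (_ *+ q) p); apply: ipiMl; by exists 1; rewrite expr1 mulr1.
Qed.

End Gen.

Section Val.
Variables (p : nat) (R : idomainType) (phi : {rmorphism R -> R}) (delta : R -> R).
Hypothesis pp : prime p.
Hypothesis Hw : witt_ring p R.
Hypothesis Hf : frob_lift p phi.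
Hypothesis Hd : is_delta p phi delta.

Local Notation ipi := (@in_pow_ideal R p).
Local Notation P := (p%:R : R).

Lemma Pnz : P != 0. Proof. by case: Hw. Qed.
Lemma Pnunit : ~~ (P \is a GRing.unit). Proof. by case: Hw => _ []. Qed.


Lemma ipi_cancel a b x : ipi (a + b) (P ^+ a * x) -> ipi b x.
Proof.
move=> [c]; rewrite exprD -mulrA => /eqP; rewrite (inj_eq (mulfI _)).
  by move/eqP=> ->; exists c.
by rewrite expf_neq0 // Pnz.
Qed.
Lemma ipi_cancel1 b x : ipi b.+1 (P * x) -> ipi b x.
Proof. by move=> h; apply: (@ipi_cancel 1); rewrite expr1 add1n. Qed.

Lemma ipi_sep x : (forall k, ipi k x) -> x = 0.
Proof.
move=> H; case: (eqVneq x 0) => // nz.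
case: Hw => _ [_ [dec _]].
have [n [u [uU ex]]] := dec x nz.
have [c hc] := H n.+1.
have : P ^+ n * u = P ^+ n * (P * c) by rewrite -ex hc exprSr mulrA.
move/(mulfI (expf_neq0 n Pnz)) => hu.
by move: uU; rewrite hu unitrM (negbTE Pnunit).
Qed.

Lemma not_ipi1_unit x : ~ ipi 1 x -> x \is a GRing.unit.
Proof.
move=> h; have nz : x != 0 by apply/eqP => e; apply: h; rewrite e; apply: ipi_zero.
case: Hw => _ [_ [dec _]].
have [n [u [uU ex]]] := dec x nz.
case: n ex => [|n] ex; first by rewrite ex expr0 mul1r.
by exfalso; apply: h; rewrite ex; apply: ipiPl.
Qed.

Lemma ipi1_prime x y : ipi 1 (x * y) -> ~ ipi 1 x -> ipi 1 y.
Proof.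
move=> hxy hx; have u := not_ipi1_unit hx.
have -> : y = x^-1 * (x * y) by rewrite mulKr.
exact: ipiMl.
Qed.

Lemma not_ipi1_1 : ~ ipi 1 (1 : R).
Proof.
move=> [c]; rewrite expr1 => e.
have : P \is a GRing.unit by apply/unitrPr; exists c; rewrite -e.
by rewrite (negbTE Pnunit).
Qed.

Lemma binomp_ipi s x y : (0 < s)%N -> ipi s.+1 ((x + P ^+ s * y) ^+ p - x ^+ p).
Proof.
move=> s0; have p1 : (1 < p)%N by apply: prime_gt1.
rewrite exprDn big_ord_recl /= subn0 expr0 mulr1 bin0 mulr1n [X in X - _]addrC addrK.
apply: ipi_sum => i _.
case: (ltnP (bump 0 i) p) => hi.
- have : (p %| 'C(p, bump 0 i))%N by apply: prime_dvd_bin => //; rewrite /bump /= add1n ltnS leq0n hi.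
  case/dvdnP => q ->; rewrite mulrnA -(mulr_natr (_ *+ q) p) -[s.+1]addn1; apply: ipiM.
    by apply: ipiMn; apply: ipiMl; apply: ipiPX.
  by exists 1; rewrite expr1 mulr1.
- have ei : bump 0 i = p.
    by apply/eqP; rewrite eqn_leq hi andbT; rewrite /bump /= add1n; have := ltn_ord i.
  rewrite ei subnn expr0 mul1r binn mulr1n exprMn -exprM.
  apply: ipiMr; rewrite -[P ^+ _]mulr1; apply: ipiPl.
  by rewrite -{1}(muln1 s) ltn_mul2l s0 /=.
Qed.

Lemma delta_shift s x u : (0 < s)%N ->
  exists w, delta (x + P ^+ s * u) = delta x + P ^+ s.-1 * (u ^+ p + P * w).
Proof.
case: s => // s _ /=.
set D := delta (x + P ^+ s.+1 * u) - delta x - P ^+ s * u ^+ p.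
have eD : P * D = P ^+ s.+1 * (P * delta u) - ((x + P ^+ s.+1 * u) ^+ p - x ^+ p).
  have h1 := Hd (x + P ^+ s.+1 * u); have h2 := Hd x; have h3 := Hd u.
  rewrite rmorphD rmorphM rmorphXn rmorph_nat in h1.
  rewrite /D !mulrBr h1 h2 h3 exprS; ring.
have : ipi s.+2 (P * D).
  rewrite eD; apply: ipiB; last by apply: binomp_ipi.
  by rewrite mulrA -exprSr; apply: ipiP.
move/ipi_cancel1 => [c hc]; exists c.
rewrite mulrDr mulrA -exprSr -hc /D; ring.
Qed.

Lemma iter_delta_shift j x u i : (i <= j)%N ->
  exists w, iter i delta (x + P ^+ j * u) =
            iter i delta x + P ^+ (j - i) * (u ^+ (p ^ i) + P * w).
Proof.
elim: i => [|i IH] hij.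
  by exists 0; rewrite /= subn0 expn0 expr1 mulr0 addr0.
have [w hw] := IH (ltnW hij).
have s0 : (0 < j - i)%N by rewrite subn_gt0.
have [w' hw'] := delta_shift (iter i delta x) (u ^+ (p ^ i) + P * w) s0.
have [c hc] : ipi 1 ((u ^+ (p ^ i) + P ^+ 1 * w) ^+ p - (u ^+ (p ^ i)) ^+ p).
  exact: binom_ipi.
exists (c + w').
rewrite /= hw hw' -subnS.
congr (_ + _ * _).
rewrite expr1 in hc; rewrite mulrDr addrA -[X in X + _ = _](subrK ((u ^+ (p ^ i)) ^+ p)).
rewrite hc -exprM -expnSr; ring.
Qed.

Lemma root_pow k w : (0 < k)%N -> exists e, ipi 1 (e ^+ k - w).
Proof.
move=> k0; case: Hw => _ [_ [_ [_ [Hac _]]]].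
have sz : (1 < size ('X^k - w%:P : {poly R})%R)%N by rewrite size_XnsubC.
have [e he] := Hac ('X^k - w%:P) (monicXnsubC w k0) sz.
by exists e; move: he; rewrite !hornerE.
Qed.

Lemma jet_surj (y : nat -> R) J :
  exists c, forall j, (j <= J)%N -> ipi 1 (iter j delta c - y j).
Proof.
elim: J => [|J [c hc]].
  by exists (y 0%N) => j; rewrite leqn0 => /eqP ->; rewrite subrr; apply: ipi_zero.
have pJ : (0 < p ^ J.+1)%N by rewrite expn_gt0 prime_gt0.
have [e he] := root_pow (y J.+1 - iter J.+1 delta c) pJ.
exists (c + P ^+ J.+1 * e) => j hj.
have [w1 hw1] := iter_delta_shift c e hj.
rewrite hw1.
case: (ltnP j J.+1) => hjJ.
  rewrite addrAC; apply: ipiD; first by apply: hc.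
  by apply: ipiPl; rewrite subn_gt0.
have -> : j = J.+1 by apply/eqP; rewrite eqn_leq hj hjJ.
rewrite subnn expr0 mul1r.
have -> : iter J.+1 delta c + (e ^+ (p ^ J.+1) + P * w1) - y J.+1 =
   (e ^+ (p ^ J.+1) - (y J.+1 - iter J.+1 delta c)) + P * w1 by ring.
apply: ipiD => //; apply: ipiMr; by exists 1; rewrite expr1 mulr1.
Qed.

Lemma residues_inf (s : seq R) : exists z, forall x, x \in s -> ~ ipi 1 (z - x).
Proof.
case: Hw => _ [_ [_ [_ [Hac _]]]].
pose A : {poly R} := 'X * \prod_(x <- s) ('X - x%:P).
have mA : A \is monic by rewrite monicMl ?monicX // monic_prod_XsubC.
have sA : (1 < size A)%N.
  rewrite /A size_mul ?polyX_eq0 ?monic_neq0 ?monic_prod_XsubC // size_polyX /=.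
  by rewrite ltnS lt0n size_poly_eq0 monic_neq0 // monic_prod_XsubC.
pose Q := A + 1.
have s1 : (size (1%R : {poly R}) < size A)%N by rewrite size_polyC oner_neq0.
have mQ : Q \is monic by rewrite monicE /Q lead_coefDl // -monicE.
have sQ : (1 < size Q)%N by rewrite /Q size_addl.
have [z hz] := Hac Q mQ sQ.
exists z => x xs hx; apply: not_ipi1_1.
have -> : (1 : R) = Q.[z] - z * \prod_(y <- s) (z - y).
  by rewrite /Q /A !hornerE horner_prod; under eq_bigr do rewrite !hornerE; ring.
apply: ipiB => //; apply: ipiMl.
rewrite (big_rem x xs) /=; apply: ipiMr => //.
Qed.

Lemma poly_van_aux n (q : {poly R}) (s : seq R) : (size q <= n)%N ->
  (forall z, (forall x, x \in s -> ~ ipi 1 (z - x)) -> ipi 1 q.[z]) ->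
  forall i, ipi 1 q`_i.
Proof.
elim: n q s => [|n IH] q s hs H i.
  by move: hs; rewrite leqn0 size_poly_eq0 => /eqP ->; rewrite coef0; apply: ipi_zero.
have [z0 hz0] := residues_inf s.
have hc := H z0 hz0.
have : root (q - (q.[z0])%:P) z0 by rewrite rootE !hornerE subrr.
case/factor_theorem => q1 hq1.
have sq1 : (size q1 <= n)%N.
  case: (eqVneq q1 0) => [->|nz]; first by rewrite size_poly0.
  have := size_mul nz (monic_neq0 (monicXsubC z0)).
  rewrite size_XsubC addn2 /= -hq1 => e.
  have := size_add q (- (q.[z0])%:P); rewrite e size_opp => hle.
  rewrite -ltnS; apply: (leq_trans hle); rewrite geq_max hs /= size_polyC.
  by case: (_ != 0).
have H1 : forall z, (forall x, x \in z0 :: s -> ~ ipi 1 (z - x)) -> ipi 1 q1.[z].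
  move=> z hz; apply: (@ipi1_prime (z - z0)); last by apply: hz; rewrite inE eqxx.
  have : (q - (q.[z0])%:P).[z] = q1.[z] * (z - z0) by rewrite hq1 !hornerE.
  rewrite mulrC => <-; rewrite !hornerE; apply: ipiB => //.
  by apply: H => x xs; apply: hz; rewrite inE xs orbT.
have hq : q = q1 * 'X - q1 * (z0%:P) + (q.[z0])%:P.
  by rewrite -mulrBr -hq1 subrK.
rewrite hq coefD coefB coefMX coefMC coefC.
apply: ipiD; last by case: (i == 0%N) => //; apply: ipi_zero.
apply: ipiB; last by apply: ipiMr; apply: (IH _ _ sq1 H1).
by case: (i == 0%N); [apply: ipi_zero | apply: (IH _ _ sq1 H1)].
Qed.

Lemma poly_van (q : {poly R}) : (forall z, ipi 1 q.[z]) -> forall i, ipi 1 q`_i.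
Proof. by move=> H; apply: (@poly_van_aux (size q) q [::]). Qed.

Section MV.
Variable n : nat.
Implicit Types (Q : {mpoly R[n]}) (W : 'I_n -> R).

Lemma coef_sumX (T : Type) (s : seq T) (c : T -> R) (g : T -> 'X_{1..n}) (Pr : pred T) m :
  (\sum_(x <- s | Pr x) c x *: ('X_[g x] : {mpoly R[n]}))@_m =
  \sum_(x <- s | Pr x && (g x == m)) c x.
Proof.
rewrite raddf_sum /= big_mkcondr /=; apply: eq_bigr => x _.
by rewrite mcoeffZ mcoeffX; case: (g x == m); rewrite ?mulr1 ?mulr0.
Qed.

Definition set0 (j : 'I_n) (m : 'X_{1..n}) : 'X_{1..n} :=
  [multinom (if i == j then 0 else m i)%N | i < n].

Definition slice (j : 'I_n) (d : nat) Q : {mpoly R[n]} :=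
  \sum_(m <- msupp Q | m j == d) Q@_m *: 'X_[set0 j m].

Lemma set0_inj j (m1 m2 : 'X_{1..n}) : m1 j = m2 j -> set0 j m1 = set0 j m2 -> m1 = m2.
Proof.
move=> e1 /mnmP e2; apply/mnmP => i; have := e2 i; rewrite !mnmE.
by case: (eqVneq i j) => [->|].
Qed.

Lemma slice_coef Q j m : (slice j (m j) Q)@_(set0 j m) = Q@_m.
Proof.
rewrite /slice coef_sumX.
case: (boolP (m \in msupp Q)) => hm.
  rewrite big_mkcond (bigD1_seq m) //= !eqxx /= big1 ?addr0 // => m' hne.
  case: ifP => // /andP[e1 /eqP e2].
  by move: hne; rewrite (set0_inj (eqP e1) e2) eqxx.
rewrite big1_seq ?(memN_msupp_eq0 hm) // => m' /andP[/andP[e1 /eqP e2] hm'].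
by move: hm; rewrite -(set0_inj (eqP e1) e2) hm'.
Qed.

Lemma prod_set0 j (m : 'X_{1..n}) W : \prod_i W i ^+ m i = W j ^+ m j * \prod_i W i ^+ set0 j m i.
Proof.
rewrite (bigD1 j) //= [in RHS](bigD1 j) //= mnmE eqxx expr0 mul1r; congr (_ * _).
by apply: eq_bigr => i hi; rewrite mnmE (negbTE hi).
Qed.

Lemma slice_eval Q j W D : (msize Q <= D)%N ->
  Q.@[W] = \sum_(d < D) (slice j d Q).@[W] * W j ^+ d.
Proof.
move=> hD; rewrite mevalE.
have -> : \sum_(m <- msupp Q) Q@_m * \prod_i W i ^+ m i =
   \sum_(m <- msupp Q) \sum_(d < D) (if m j == d then Q@_m * \prod_i W i ^+ m i else 0).
  apply: eq_big_seq => m hm.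
  have hmj : (m j < D)%N.
    apply: (leq_ltn_trans _ (leq_trans (msize_mdeg_lt hm) hD)).
    by rewrite mdegE (bigD1 j) //= leq_addr.
  by rewrite -big_mkcond (big_pred1 (Ordinal hmj)) // => d; rewrite eq_sym.
rewrite exchange_big /=; apply: eq_bigr => d _.
rewrite /slice raddf_sum /= mulr_suml [RHS]big_mkcond /=.
apply: eq_bigr => m _; case: eqP => [hd|//].
by rewrite mevalZ mevalX (prod_set0 j m) hd; ring.
Qed.

Lemma slice_indep Q j d W z :
  (slice j d Q).@[W] = (slice j d Q).@[fun i => if i == j then z else W i].
Proof.
rewrite /slice !raddf_sum /=; apply: eq_bigr => m _.
rewrite !mevalZ !mevalX; congr (_ * _); apply: eq_bigr => i _.
by rewrite mnmE; case: (eqVneq i j).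
Qed.

Definition vlt J Q := forall m, m \in msupp Q -> forall i : 'I_n, (J <= i)%N -> m i = 0%N.

Lemma slice_vlt J Q j d : vlt J.+1 Q -> nat_of_ord j = J -> vlt J (slice j d Q).
Proof.
move=> hQ hj m /msupp_sum_le /flattenP [s /mapP [m' hm' ->] hm] i hi.
rewrite mem_filter in hm'; case/andP: hm' => _ hm'.
have := msuppZ_le hm; rewrite msuppX inE => /eqP ->.
rewrite mnmE; case: (eqVneq i j) => // hij.
apply: hQ => //; rewrite ltn_neqAle hi andbT; apply/negP => /eqP e.
by move/eqP: hij; apply; apply: val_inj; rewrite /= hj -e.
Qed.

Lemma mvan_aux J Q : vlt J Q -> (forall W, ipi 1 Q.@[W]) -> forall m, ipi 1 Q@_m.
Proof.
elim: J Q => [|J IH] Q hv H m.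
  case: (boolP (m \in msupp Q)) => hm; last by rewrite (memN_msupp_eq0 hm); apply: ipi_zero.
  have m0 : m = 0%MM by apply/mnmP => i; rewrite mnmE; apply: hv.
  have e0 : forall x, x \in msupp Q -> x = 0%MM.
    by move=> x hx; apply/mnmP => i; rewrite mnmE; apply: hv.
  have e : perm_eq (msupp Q) [:: m].
    apply: uniq_perm => // x; rewrite inE; apply/idP/eqP => [hx|->//].
    by rewrite (e0 _ hx) m0.
  have := H (fun _ => 0); rewrite mevalE (perm_big _ e) big_seq1.
  by rewrite m0 big1 ?mulr1 // => i _; rewrite mnmE expr0.
case: (ltnP J n) => hJ; last first.
  apply: IH => // m' hm' i hi; exfalso; move: (ltn_ord i); rewrite ltnNge.
  by rewrite (leq_trans hJ hi).
pose j := Ordinal hJ.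
have Hs : forall d W, ipi 1 (slice j d Q).@[W].
  move=> d W.
  pose D := maxn (msize Q) d.+1.
  pose q : {poly R} := \poly_(e < D) (slice j e Q).@[W].
  have hq : forall z, ipi 1 q.[z].
    move=> z; rewrite horner_poly.
    have := H (fun i => if i == j then z else W i).
    rewrite (@slice_eval Q j _ D (leq_maxl (msize Q) d.+1)) eqxx.
    congr (ipi 1 _); apply: eq_bigr => e _.
    by rewrite -slice_indep.
  have := poly_van hq d; rewrite coef_poly.
  by have -> : (d < D)%N by rewrite leq_max ltnSn orbT.
have hmj := slice_coef Q j m.
rewrite -hmj; apply: IH; first by apply: slice_vlt.
exact: Hs.
Qed.

Lemma mvan Q : (forall W, ipi 1 Q.@[W]) -> forall m, ipi 1 Q@_m.
Proof.
apply: (@mvan_aux n) => m _ i hi; exfalso; move: (ltn_ord i); by rewrite ltnNge hi.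
Qed.

End MV.

Lemma meval_cong n k (Q : {mpoly R[n]}) (y W : 'I_n -> R) :
  (forall i, ipi k (y i - W i)) -> ipi k (Q.@[y] - Q.@[W]).
Proof.
move=> H; rewrite !mevalE -sumrB; apply: ipi_sum => m _.
rewrite -mulrBr; apply: ipiMl; apply: eqm_prod => i; exact: eqmX.
Qed.

Lemma mpoly_divP n (Q : {mpoly R[n]}) :
  (forall m, ipi 1 Q@_m) -> exists Q', Q = P *: Q'.
Proof.
elim/mpolyind: Q => [|c m Q0 hm _ IH] H; first by exists 0; rewrite scaler0.
have hc : ipi 1 c.
  have := H m; rewrite mcoeffD mcoeffZ mcoeffX eqxx mulr1 (memN_msupp_eq0 hm) addr0.
  by [].
have [Q0' e0] : exists Q', Q0 = P *: Q'.
  apply: IH => m'; case: (eqVneq m' m) => [->|ne].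
    by rewrite (memN_msupp_eq0 hm); apply: ipi_zero.
  by have := H m'; rewrite mcoeffD mcoeffZ mcoeffX eq_sym (negbTE ne) mulr0 add0r.
case: hc => c' ->; exists (c' *: 'X_[m] + Q0').
by rewrite scalerDr e0 scalerA expr1.
Qed.

Lemma vanish_k n (S : ('I_n -> R) -> Prop) :
  (forall W, exists y, S y /\ forall i, ipi 1 (y i - W i)) ->
  forall k (Q : {mpoly R[n]}), (forall y, S y -> ipi k Q.@[y]) -> forall m, ipi k Q@_m.
Proof.
move=> dense; elim=> [|k IH] Q H m; first exact: ipi0.
have H1 : forall m, ipi 1 Q@_m.
  apply: mvan => W; have [y [Sy hy]] := dense W.
  have := meval_cong Q hy; have := H y Sy.
  move/(ipi_le (ltn0Sn k)) => h1 h2.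
  by have := ipiB h1 h2; rewrite opprB addrC subrK.
have [Q' eQ] := mpoly_divP H1.
have H' : forall y, S y -> ipi k Q'.@[y].
  by move=> y Sy; apply: ipi_cancel1; have := H y Sy; rewrite eQ mevalZ.
rewrite eQ mcoeffZ -add1n; apply: ipiM; first exact: ipi1P.
exact: IH.
Qed.

Section MP.
Variable n : nat.
Implicit Types (Q A B : {mpoly R[n]}).

Definition mp (G : 'X_{1..n} -> Prop) Q := forall mm, mm \in msupp Q -> G mm.

Lemma mp0 G : mp G 0. Proof. by move=> mm; rewrite msupp0. Qed.
Lemma mpD G A B : mp G A -> mp G B -> mp G (A + B).
Proof. by move=> hA hB mm /msuppD_le; rewrite mem_cat => /orP[/hA|/hB]. Qed.
Lemma mpN G A : mp G A -> mp G (- A).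
Proof. by move=> hA mm; rewrite (perm_mem (msuppN A)); apply: hA. Qed.
Lemma mpB G A B : mp G A -> mp G B -> mp G (A - B).
Proof. by move=> hA hB; apply: mpD => //; apply: mpN. Qed.
Lemma mpZ G c A : mp G A -> mp G (c *: A).
Proof. by move=> hA mm /msuppZ_le; apply: hA. Qed.
Lemma mpZinv G A : mp G (P *: A) -> mp G A.
Proof. by move=> hA mm; rewrite -(perm_mem (msuppZ A Pnz)); apply: hA. Qed.
Lemma mp_sum G (I : Type) (s : seq I) (F : I -> {mpoly R[n]}) :
  (forall i, mp G (F i)) -> mp G (\sum_(i <- s) F i).
Proof.
move=> H; apply: (big_ind (mp G)); [exact: mp0| exact: mpD | move=> i _; exact: H].
Qed.
Lemma mpXm G mm : G mm -> mp G 'X_[mm].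
Proof. by move=> h mm'; rewrite msuppX inE => /eqP ->. Qed.
Lemma mpC G c : G 0%MM -> mp G c%:MP.
Proof.
move=> h mm; rewrite msuppC; case: (c == 0) => //; by rewrite inE => /eqP ->.
Qed.
Lemma mpM (G1 G2 G3 : 'X_{1..n} -> Prop) A B :
  (forall a b, G1 a -> G2 b -> G3 (a + b)%MM) -> mp G1 A -> mp G2 B -> mp G3 (A * B).
Proof.
move=> HG hA hB mm /msuppM_le /allpairsP [[a b] [ha hb ->]] /=.
by apply: HG; [apply: hA | apply: hB].
Qed.
Lemma mp_map G (f : {rmorphism R -> R}) A : mp G A -> mp G (map_mpoly f A).
Proof.
move=> hA mm; rewrite mcoeff_msupp mcoeff_map_mpoly => h; apply: hA.
by rewrite mcoeff_msupp; by apply: contra_neq h => ->; apply: rmorph0.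
Qed.

Definition ordge d := mp (fun mm => (d <= mdeg mm)%N).

Lemma ordge_le d d' A : (d' <= d)%N -> ordge d A -> ordge d' A.
Proof. by move=> h hA mm /hA; apply: leq_trans. Qed.
Lemma ordgeM a b A B : ordge a A -> ordge b B -> ordge (a + b) (A * B).
Proof. by apply: mpM => x y hx hy; rewrite mdegD leq_add. Qed.
Lemma ordge0 A : ordge 0 A. Proof. by []. Qed.
Lemma ordgeX a A e : ordge a A -> ordge (a * e) (A ^+ e).
Proof.
move=> h; elim: e => [|e IH]; first by rewrite muln0.
by rewrite exprS mulnS; apply: ordgeM.
Qed.
Lemma ordge_prod (I : Type) (s : seq I) (a : I -> nat) (F : I -> {mpoly R[n]}) :
  (forall i, ordge (a i) (F i)) -> ordge (\sum_(i <- s) a i) (\prod_(i <- s) F i).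
Proof.
move=> H; elim: s => [|x s IH]; first by rewrite big_nil.
by rewrite !big_cons; apply: ordgeM.
Qed.
Lemma ordgeXv k : ordge 1 ('X_k : {mpoly R[n]}).
Proof. by apply: mpXm; rewrite mdeg1. Qed.

Lemma ordge_comp d A (U : n.-tuple {mpoly R[n]}) :
  ordge d A -> (forall i, mp (fun mm => (1 <= mdeg mm)%N) (tnth U i)) ->
  mp (fun mm => (d <= mdeg mm)%N) (A \mPo U).
Proof.
move=> hA hU; rewrite comp_mpolyEX; apply: mp_sum => mm.
case: (boolP (mm \in msupp A)) => hm; last first.
  by rewrite (memN_msupp_eq0 hm) scale0r; apply: mp0.
apply: mpZ; rewrite comp_mpolyX.
have h : ordge (\sum_(i < n) mm i) (\prod_(i < n) tnth U i ^+ mm i).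
  by apply: ordge_prod => i; have := ordgeX (e := mm i) (hU i); rewrite mul1n.
by apply: (ordge_le _ h); rewrite -mdegE; exact: hA.
Qed.

Lemma prod_scale (t : nat) (Z : 'I_n -> R) (mm : 'X_{1..n}) :
  \prod_i (P ^+ t * Z i) ^+ mm i = P ^+ (t * mdeg mm) * \prod_i Z i ^+ mm i.
Proof.
rewrite mdegE; under eq_bigr do rewrite exprMn.
by rewrite big_split /= prodrXr exprM.
Qed.

Lemma ordge_eval d A (t : nat) (Z : 'I_n -> R) :
  ordge d A -> ipi (t * d) (A.@[fun i => P ^+ t * Z i]).
Proof.
move=> hA; rewrite mevalE; apply: ipi_sum => mm hm; apply: ipiMl.
have -> : \prod_i (P ^+ t * Z i) ^+ mm i = P ^+ (t * mdeg mm) * \prod_i Z i ^+ mm i.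
  rewrite mdegE; under eq_bigr do rewrite exprMn.
  by rewrite big_split /= prodrXr exprM.
by apply: ipiPl; rewrite leq_mul2l (hA _ hm) orbT.
Qed.

Definition degle d := mp (fun mm => (mdeg mm <= d)%N).
Lemma degleM a b A B : degle a A -> degle b B -> degle (a + b) (A * B).
Proof. by apply: mpM => x y hx hy; rewrite mdegD leq_add. Qed.
Lemma degle1 : degle 0 (1 : {mpoly R[n]}).
Proof. by rewrite -mpolyC1; apply: mpC; rewrite mdeg0. Qed.
Lemma degleX a A e : degle a A -> degle (a * e) (A ^+ e).
Proof.
move=> h; elim: e => [|e IH]; first by rewrite muln0 expr0; apply: degle1.
by rewrite exprS mulnS; apply: degleM.
Qed.
Lemma degle_prod (I : Type) (s : seq I) (a : I -> nat) (F : I -> {mpoly R[n]}) :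
  (forall i, degle (a i) (F i)) -> degle (\sum_(i <- s) a i) (\prod_(i <- s) F i).
Proof.
move=> H; elim: s => [|x s IH]; first by rewrite !big_nil; apply: degle1.
by rewrite !big_cons; apply: degleM.
Qed.

End MP.

Section Jets.
Variables (r M N : nat) (b : 'I_M -> R).

Definition V := ('I_r.+1 * 'I_M)%type.
Definition nV := #|{: V}|.
Definition lev (k : 'I_nV) : nat := (enum_val k).1.
Definition crd (k : 'I_nV) : 'I_M := (enum_val k).2.
Definition shv (v : V) : V := (inord v.1.+1, v.2).
Definition shk (k : 'I_nV) : 'I_nV := enum_rank (shv (enum_val k)).
Definition Utup : nV.-tuple {mpoly R[nV]} :=
  [tuple ('X_i ^+ p + P *: 'X_(shk i)) | i < nV].
Definition jv (c : 'I_M -> R) (k : 'I_nV) : R := iter (lev k) delta (c (crd k)).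

Lemma lev_le k : (lev k <= r)%N.
Proof. by rewrite /lev -ltnS. Qed.

Lemma lev_shk k : (lev k < r)%N -> lev (shk k) = (lev k).+1 /\ crd (shk k) = crd k.
Proof.
by move=> h; rewrite /lev /crd /shk enum_rankK /shv /= inordK.
Qed.

Lemma U_jv c k : (lev k < r)%N -> (tnth Utup k).@[jv c] = phi (jv c k).
Proof.
move=> h; rewrite tnth_mktuple mevalD mevalZ rmorphXn /= !mevalXU.
have [e1 e2] := lev_shk h.
rewrite /jv e1 e2 iterS; have := Hd (iter (lev k) delta (c (crd k))).
by move=> ->; rewrite subrKC.
Qed.

Definition vlv J (Q : {mpoly R[nV]}) :=
  mp (fun mm : 'X_{1..nV} => forall i, (J <= lev i)%N -> mm i = 0%N) Q.

Lemma vlvM J A B : vlv J A -> vlv J B -> vlv J (A * B).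
Proof.
by apply: mpM => x y hx hy i hi; rewrite mnmDE hx ?hy.
Qed.
Lemma vlv1 J : vlv J 1.
Proof. by rewrite -mpolyC1; apply: mpC => i _; rewrite mnm0E. Qed.
Lemma vlvC J c : vlv J c%:MP.
Proof. by apply: mpC => i _; rewrite mnm0E. Qed.
Lemma vlvXv J k : (lev k < J)%N -> vlv J 'X_k.
Proof.
move=> h; apply: mpXm => i hi; rewrite mnm1E; case: eqP => // e.
by move: h; rewrite e ltnNge hi.
Qed.
Lemma vlvX J A e : vlv J A -> vlv J (A ^+ e).
Proof.
move=> h; elim: e => [|e IH]; first by rewrite expr0; apply: vlv1.
by rewrite exprS; apply: vlvM.
Qed.
Lemma vlv_prod J (I : Type) (s : seq I) (F : I -> {mpoly R[nV]}) :
  (forall i, vlv J (F i)) -> vlv J (\prod_(i <- s) F i).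
Proof.
move=> H; apply: (big_ind (vlv J)); [exact: vlv1 | exact: vlvM | move=> i _; exact: H].
Qed.
Lemma vlv_le J J' A : (J <= J')%N -> vlv J A -> vlv J' A.
Proof. by move=> h hA mm /hA hm i hi; apply: hm; apply: leq_trans hi. Qed.

Lemma vlv_comp J J' A (U : nV.-tuple {mpoly R[nV]}) :
  vlv J A -> (forall k, (lev k < J)%N -> vlv J' (tnth U k)) -> vlv J' (A \mPo U).
Proof.
move=> hA hU; rewrite comp_mpolyEX; apply: mp_sum => mm.
case: (boolP (mm \in msupp A)) => hm; last first.
  by rewrite (memN_msupp_eq0 hm) scale0r; apply: mp0.
apply: mpZ; rewrite comp_mpolyX; apply: vlv_prod => i.
case: (ltnP (lev i) J) => hi; first by apply: vlvX; apply: hU.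
by rewrite (hA _ hm i hi) expr0; apply: vlv1.
Qed.

Lemma vlv_eval J A (y y' : 'I_nV -> R) :
  vlv J A -> (forall k, (lev k < J)%N -> y k = y' k) -> A.@[y] = A.@[y'].
Proof.
move=> hA hy; rewrite !mevalE; apply: eq_big_seq => mm hm; congr (_ * _).
apply: eq_bigr => i _; case: (ltnP (lev i) J) => hi; first by rewrite hy.
by rewrite (hA _ hm i hi) !expr0.
Qed.

Local Notation ipm := (@in_pow_ideal {mpoly R[nV]} p).

Definition Phi (Q : {mpoly R[nV]}) := map_mpoly phi Q \mPo Utup - Q ^+ p.

Lemma ipm_Z k (c : R) (A : {mpoly R[nV]}) : ipm k A -> ipm k (c *: A).
Proof. by move=> h; rewrite -mul_mpolyC; apply: ipiMl. Qed.

Lemma ipm_Zl (c : R) (A : {mpoly R[nV]}) : ipi 1 c -> ipm 1 (c *: A).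
Proof.
case=> w ->; rewrite expr1 -scalerA scaler_nat -mulr_natl; apply: ipiMr.
by exists 1; rewrite expr1 mulr1.
Qed.

Lemma Phi_ipm Q : ipm 1 (Phi Q).
Proof.
elim/mpolyind: Q => [|c mm Q0 _ _ IH].
  rewrite /Phi rmorph0 comp_mpoly0 expr0n /= gtn_eqF ?prime_gt0 // subrr.
  exact: ipi_zero.
have -> : Phi (c *: 'X_[mm] + Q0) = Phi (c *: 'X_[mm]) + Phi Q0 -
   ((c *: 'X_[mm] + Q0) ^+ p - (c *: 'X_[mm]) ^+ p - Q0 ^+ p).
  by rewrite /Phi rmorphD comp_mpolyD; ring.
apply: ipiB; last by apply: frob_add.
apply: ipiD => //.
rewrite /Phi map_mpolyZ map_mpolyX comp_mpolyZ comp_mpolyX exprZn.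
rewrite (@mpolyXE_id _ R mm) -prodrXl.
under [X in _ - _ *: X]eq_bigr do rewrite exprAC.
rewrite -[X in X - _](subrK (c ^+ p *: \prod_(i < nV) tnth Utup i ^+ mm i)).
rewrite -scalerBl -addrA -scalerBr; apply: ipiD.
  by apply: ipm_Zl; apply: Hf.
apply: ipm_Z; apply: eqm_prod => i; apply: eqmX.
rewrite tnth_mktuple addrAC subrr add0r scaler_nat -mulr_natl; apply: ipiMr.
by exists 1; rewrite expr1 mulr1.
Qed.

Lemma Phi_div Q : exists Q', Phi Q = P *: Q'.
Proof.
by have [c] := Phi_ipm Q; rewrite expr1 => ->; exists c; rewrite mulr_natl scaler_nat.
Qed.

Lemma phi_eval (A : {mpoly R[nV]}) (y : 'I_nV -> R) :
  phi (A.@[y]) = (map_mpoly phi A).@[fun k => phi (y k)].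
Proof.
elim/mpolyind: A => [|c mm Q0 _ _ IH]; first by rewrite meval0 rmorph0 (rmorph0 (map_mpoly phi)) meval0.
rewrite !rmorphD /= ?mevalD -IH map_mpolyZ map_mpolyX !mevalZ !mevalX.
by rewrite rmorphM rmorph_prod; under eq_bigr do rewrite rmorphXn.
Qed.

Definition linS (s : seq ('I_nV * R)) : {mpoly R[nV]} := \sum_(x <- s) x.2 *: 'X_(x.1).

Lemma linS_eval s y : (linS s).@[y] = \sum_(x <- s) x.2 * y x.1.
Proof. by rewrite /linS raddf_sum /=; apply: eq_bigr => x _; rewrite mevalZ mevalXU. Qed.

Lemma linS_scale s a y : (linS s).@[fun k => a * y k] = a * (linS s).@[y].
Proof. by rewrite !linS_eval mulr_sumr; apply: eq_bigr => x _; rewrite mulrCA. Qed.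

Lemma linS_map s : map_mpoly phi (linS s) = linS [seq (x.1, phi x.2) | x <- s].
Proof.
rewrite /linS rmorph_sum big_map /=; apply: eq_bigr => x _.
by rewrite map_mpolyZ map_mpolyX.
Qed.

Lemma linS_cat s1 s2 : linS (s1 ++ s2) = linS s1 + linS s2.
Proof. by rewrite /linS big_cat. Qed.

Lemma linS_scal a s : a *: linS s = linS [seq (x.1, a * x.2) | x <- s].
Proof.
by rewrite /linS scaler_sumr big_map; apply: eq_bigr => x _; rewrite scalerA.
Qed.

Lemma linS_X k : 'X_k = linS [:: (k, 1)].
Proof. by rewrite /linS big_seq1 scale1r. Qed.

Lemma linS_comp s : linS s \mPo Utup =
  \sum_(x <- s) x.2 *: 'X_(x.1) ^+ p + P *: linS [seq (shk x.1, x.2) | x <- s].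
Proof.
rewrite /linS raddf_sum big_map scaler_sumr -big_split /=; apply: eq_bigr => x _.
by rewrite comp_mpolyZ comp_mpolyXU -tnth_nth tnth_mktuple scalerDr scalerA mulrC -scalerA.
Qed.

Lemma linS_ordge s : ordge 1 (linS s).
Proof. by apply: mp_sum => x; apply: mpZ; apply: ordgeXv. Qed.

Lemma linS_vlv J s : (forall x, x \in s -> (lev x.1 < J)%N) -> vlv J (linS s).
Proof.
move=> h; rewrite /linS big_seq; apply: (big_ind (vlv J)); [exact: mp0| exact: mpD|].
by move=> x hx; apply: mpZ; apply: vlvXv; apply: h.
Qed.

Lemma binE (c : R) (W : {mpoly R[nV]}) e : ordge 1 W ->
  ordge 2 ((c%:MP + W) ^+ e - (c ^+ e)%:MP - (c ^+ e.-1 *+ e)%:MP * W).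
Proof.
move=> hW; elim: e => [|e IH].
  by rewrite !expr0 mulr0n rmorph0 mul0r subr0 mpolyC1 subrr; apply: mp0.
have -> : (c%:MP + W) ^+ e.+1 - (c ^+ e.+1)%:MP - (c ^+ e.+1.-1 *+ e.+1)%:MP * W =
  ((c%:MP + W) ^+ e - (c ^+ e)%:MP - (c ^+ e.-1 *+ e)%:MP * W) * (c%:MP + W)
  + (c ^+ e.-1 *+ e)%:MP * (W * W).
  case: e {IH} => [|e] /=.
    by rewrite !rmorphMn /= !rmorphXn /=; ring.
  by rewrite !rmorphMn /= !rmorphXn /= !exprS !mulrS; ring.
apply: mpD; last by rewrite -[2%N]/(0 + (1 + 1))%N; apply: ordgeM => //; apply: ordgeM.
by rewrite -[2%N]/(2 + 0)%N; apply: ordgeM.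
Qed.

Definition good (v : V) (T : {mpoly R[nV]}) : Prop :=
  [/\ (forall c, T.@[jv c] = iter v.1 delta (b v.2 + P ^+ N * c v.2)),
      vlv v.1.+1 T &
      exists s H, [/\ T = (iter v.1 delta (b v.2))%:MP + P ^+ N *: ('X_(enum_rank v) + linS s) + H,
                      (forall x, x \in s -> (lev x.1 < v.1)%N) & ordge 2 H]].

Lemma lev_rank (v : V) : lev (enum_rank v) = v.1.
Proof. by rewrite /lev enum_rankK. Qed.
Lemma crd_rank (v : V) : crd (enum_rank v) = v.2.
Proof. by rewrite /crd enum_rankK. Qed.
Lemma jv_rank c (v : V) : jv c (enum_rank v) = iter v.1 delta (c v.2).
Proof. by rewrite /jv lev_rank crd_rank. Qed.

Lemma good_base (v : V) : nat_of_ord v.1 = 0%N ->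
  good v ((b v.2)%:MP + P ^+ N *: 'X_(enum_rank v)).
Proof.
move=> h0; split.
- by move=> c; rewrite mevalD mevalC mevalZ mevalXU jv_rank h0.
- apply: mpD; first exact: vlvC.
  by apply: mpZ; apply: vlvXv; rewrite lev_rank h0.
- exists [::], 0; split => //; last exact: mp0.
  by rewrite h0 /linS big_nil addr0 addr0.
Qed.

Lemma shv1 (v : V) : (v.1 < r)%N -> nat_of_ord (shv v).1 = (v.1).+1.
Proof. by move=> h; rewrite /shv /= inordK. Qed.

Lemma shk_rank (v : V) : shk (enum_rank v) = enum_rank (shv v).
Proof. by rewrite /shk enum_rankK. Qed.

Lemma alg_stepA (A : comNzRingType) (cp dm PN Xp XS Sx L2 mH cpm1 XL L H E Pm : A) :
  cp + Pm * dm + PN * (Xp + Pm * XS + (Sx + Pm * L2)) + mH -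
  (cp + cpm1 * Pm * (PN * (XL + L) + H) + E) -
  Pm * (dm + PN * (XS + (L2 + - cpm1 * (XL + L)))) =
  PN * (Xp + Sx) + mH - cpm1 * Pm * H - E.
Proof. ring. Qed.

Lemma good_step (v : V) T : (v.1 < r)%N -> good v T -> exists T', good (shv v) T'.
Proof.
move=> hr [hE hL [s [H [eT hs hH]]]].
have [T' eT'] := Phi_div T.
have hs1 := shv1 hr.
exists T'; split.
- move=> c.
  have h := congr1 (meval (jv c)) eT'; rewrite mevalZ in h.
  apply: (mulfI Pnz); rewrite -h /Phi mevalB rmorphXn /= comp_mpoly_meval.
  rewrite (@vlv_eval v.1.+1 _ _ (fun k => phi (jv c k))).
  + by rewrite -phi_eval hE hs1 /= Hd.
  + exact: mp_map.
  + by move=> k hk; rewrite U_jv //; apply: leq_trans hk hr.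
- rewrite hs1; apply: mpZinv; rewrite -eT' /Phi; apply: mpB.
  + apply: (@vlv_comp v.1.+1); first exact: mp_map.
    move=> k hk; rewrite tnth_mktuple; apply: mpD.
      by apply: vlvX; apply: vlvXv; apply: leq_trans hk _.
    apply: mpZ; apply: vlvXv; have [e1 _] := lev_shk (leq_trans hk hr).
    by rewrite e1.
  + by apply: vlvX; apply: vlv_le hL.
pose C := iter v.1 delta (b v.2).
pose lv := enum_rank v.
pose L := linS s.
pose W := P ^+ N *: ('X_lv + L) + H.
pose s2 := [seq (shk x.1, x.2) | x <- [seq (x.1, phi x.2) | x <- s]].
pose s3 := [seq (x.1, - C ^+ p.-1 * x.2) | x <- (lv, 1) :: s].
pose snew := s2 ++ s3.
pose Tgt := (delta C)%:MP + P ^+ N *: ('X_(enum_rank (shv v)) + linS snew).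
exists snew, (T' - Tgt); split.
- by rewrite /Tgt hs1 /= -/C addrC subrK.
- move=> x; rewrite mem_cat => /orP [].
    rewrite /s2 -map_comp => /mapP [y hy ->] /=.
    have hly := hs y hy; have [e1 _] := lev_shk (ltn_trans hly hr).
    by rewrite hs1 e1.
  rewrite /s3 => /mapP [y hy ->] /=; rewrite hs1 ltnS.
  move: hy; rewrite inE => /orP [/eqP -> /=|hy]; first by rewrite /lv lev_rank.
  by apply: ltnW; apply: hs.
apply: mpZinv.
pose mH := map_mpoly phi H \mPo Utup.
pose Sx := \sum_(x <- s) phi x.2 *: ('X_(x.1) : {mpoly R[nV]}) ^+ p.
pose E := (C%:MP + W) ^+ p - (C ^+ p)%:MP - (C ^+ p.-1 *+ p)%:MP * W.
pose D := P ^+ N *: ('X_lv ^+ p + Sx) + mH - (C ^+ p.-1 *+ p)%:MP * H - E.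
have eTW : T = C%:MP + W by rewrite eT /W addrA.
have eM : map_mpoly phi T \mPo Utup = (phi C)%:MP +
   P ^+ N *: ('X_lv ^+ p + P *: 'X_(shk lv) + (Sx + P *: linS s2)) + mH.
  rewrite eTW /W !rmorphD /= map_mpolyC map_mpolyZ rmorphD /= map_mpolyX linS_map.
  rewrite rmorphXn rmorph_nat comp_mpolyC comp_mpolyZ comp_mpolyD comp_mpolyXU.
  by rewrite linS_comp big_map -tnth_nth tnth_mktuple addrA.
have eP : T ^+ p = (C ^+ p)%:MP + (C ^+ p.-1 *+ p)%:MP * W + E.
  by rewrite eTW /E; set X := (_ + W) ^+ p; ring.
have ephi : phi C = C ^+ p + P * delta C by rewrite Hd addrC subrK.
have eD : Phi T - P *: Tgt = D.
  rewrite /Phi eM eP /Tgt /D /snew linS_cat /s3 -linS_scal /linS big_cons -/(linS s) -/L.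
  rewrite scale1r -shk_rank -/lv ephi /W.
  rewrite -!mul_mpolyC !rmorphD !rmorphM /= !rmorphN /= !rmorphMn /= ?mpolyC1.
  rewrite -(mulr_natr ((C ^+ p.-1)%:MP)); exact: alg_stepA.
rewrite scalerBr -eT' eD /D; apply: mpB; last by apply: binE; apply: mpD; [apply: mpZ; apply: mpD; [apply: ordgeXv| apply: linS_ordge] | apply: ordge_le hH].
have p2 : (2 <= p)%N by apply: prime_gt1.
have hXp : forall k, ordge 2 (('X_k : {mpoly R[nV]}) ^+ p).
  move=> k; apply: (ordge_le p2); have := ordgeX (e := p) (@ordgeXv _ k).
  by rewrite mul1n.
apply: mpB; last first.
  by rewrite -[2%N]/(0 + 2)%N; apply: ordgeM.
apply: mpD.
  apply: mpZ; apply: mpD; first exact: hXp.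
  by apply: mp_sum => x; apply: mpZ; apply: hXp.
apply: ordge_comp; first exact: mp_map.
move=> k; rewrite tnth_mktuple; apply: mpD.
  by apply: (@ordge_le _ 2 1 _ isT); apply: hXp.
by apply: mpZ; apply: ordgeXv.
Qed.

Lemma good_ex (v : V) : exists T, good v T.
Proof.
move: {2}(nat_of_ord v.1) (erefl (nat_of_ord v.1)) => j.
elim: j v => [|j IH] v hv; first by eexists; apply: good_base.
have hjr : (j < r)%N by rewrite -ltnS -hv.
pose u : V := (inord j, v.2).
have hu : nat_of_ord u.1 = j by rewrite /= inordK // ltnW.
have [T hT] := IH u hu.
have [T' hT'] := good_step (leq_ltn_trans (eq_leq hu) hjr) hT.
have -> : v = shv u.
  rewrite [LHS]surjective_pairing /shv /=; congr (_, _); apply: val_inj => /=.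
  by rewrite hu inordK ?hv // ltnS.
by exists T'.
Qed.

Definition jb := jv b.

Lemma dense_jv (W : 'I_nV -> R) : exists c, forall k, ipi 1 (jv c k - W k).
Proof.
have : forall i : 'I_M, exists ci : R, forall j, (j <= r)%N ->
    ipi 1 (iter j delta ci - W (enum_rank ((inord j : 'I_r.+1), i))).
  by move=> i; apply: jet_surj.
case/fin_all_exists => c hc; exists c => k.
have := hc (crd k) (lev k) (lev_le k).
by rewrite /jv /lev /crd inord_val -surjective_pairing enum_valK.
Qed.

Section Core.
Variables (Tf : V -> {mpoly R[nV]}) (sL : 'I_nV -> seq ('I_nV * R))
  (HL : 'I_nV -> {mpoly R[nV]}).
Hypothesis hTE : forall v c, (Tf v).@[jv c] = iter v.1 delta (b v.2 + P ^+ N * c v.2).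
Hypothesis hTD : forall k,
  Tf (enum_val k) = (jb k)%:MP + P ^+ N *: ('X_k + linS (sL k)) + HL k.
Hypothesis hsL : forall k x, x \in sL k -> (lev x.1 < lev k)%N.
Hypothesis hHL : forall k, ordge 2 (HL k).

Definition ell (Z : 'I_nV -> R) k := Z k + (linS (sL k)).@[Z].

Lemma lin_surj (W : 'I_nV -> R) : exists Z, forall k, ell Z k = W k.
Proof.
suff : forall J, exists Z, forall k, (lev k < J)%N -> ell Z k = W k.
  by case/(_ r.+1) => Z hZ; exists Z => k; apply: hZ; rewrite ltnS lev_le.
elim=> [|J [Z hZ]]; first by exists W.
pose Z' := fun k => if lev k == J then W k - (linS (sL k)).@[Z] else Z k.
have agree : forall k, (lev k < J)%N -> Z' k = Z k.
  by move=> k hk; rewrite /Z' ltn_eqF.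
exists Z' => k; rewrite ltnS leq_eqVlt => /orP [/eqP hk|hk].
  rewrite /ell /Z' hk eqxx (@vlv_eval (lev k) _ Z' Z).
    by rewrite subrK.
  - by apply: linS_vlv => x; apply: hsL.
  - by move=> k' hk'; apply: agree; rewrite -hk.
rewrite /ell agree // (@vlv_eval (lev k) _ Z' Z); first exact: hZ.
  by apply: linS_vlv => x; apply: hsL.
by move=> k' hk'; apply: agree; apply: ltn_trans hk.
Qed.

Definition Ttup : nV.-tuple {mpoly R[nV]} := [tuple Tf (enum_val k) | k < nV].
Definition trans : nV.-tuple {mpoly R[nV]} := [tuple 'X_k + (jb k)%:MP | k < nV].

Lemma T_small t Z k : (N <= t)%N -> exists w,
  (Tf (enum_val k)).@[fun i => P ^+ t * Z i] = jb k + P ^+ (N + t) * (ell Z k + P ^+ (t - N) * w).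
Proof.
move=> hN; have [w hw] := ordge_eval t Z (@hHL k).
exists w; rewrite hTD !mevalD mevalC mevalZ mevalD mevalXU linS_scale hw.
rewrite /ell; have -> : (t * 2 = (N + t) + (t - N))%N.
  by lia.
by rewrite !exprD; ring.
Qed.

Lemma Pt_eval (A : {mpoly R[nV]}) Y : (A \mPo trans).@[Y] = A.@[fun k => Y k + jb k].
Proof.
rewrite comp_mpoly_meval; apply: meval_eq => k.
by rewrite tnth_mktuple mevalD mevalXU mevalC.
Qed.

Lemma Q_eval (A : {mpoly R[nV]}) Y :
  (A \mPo Ttup).@[Y] = A.@[fun k => (Tf (enum_val k)).@[Y]].
Proof. by rewrite comp_mpoly_meval; apply: meval_eq => k; rewrite tnth_mktuple. Qed.

Variable Pk : nat -> {mpoly R[nV]}.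
Hypothesis hPk : forall K c, ipi K ((Pk K \mPo Ttup).@[jv c]).

Lemma Q_all K Y : ipi K ((Pk K \mPo Ttup).@[Y]).
Proof.
have hc := @vanish_k nV (fun y => exists c, y = jv c) _ K (Pk K \mPo Ttup).
rewrite mevalE; apply: ipi_sum => mm _; apply: ipiMr; apply: hc.
  move=> W; have [c hc'] := dense_jv W; by exists (jv c); split; first by exists c.
by move=> y [c ->]; apply: hPk.
Qed.

Lemma core e : forall k, exists K0, forall K, (K0 <= K)%N ->
  forall mm, (mdeg mm < e)%N -> ipi k ((Pk K \mPo trans)@_mm).
Proof.
elim: e => [|e IH] k'.
  by exists 0%N => K _ mm; rewrite ltn0.
pose t := (N + k')%N; pose s := (N + t)%N; pose k := (s * e + k')%N.
have [K0 hK0] := IH k.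
exists (maxn K0 k) => K hK mm hmm.
have hK0' : (K0 <= K)%N by apply: leq_trans hK; apply: leq_maxl.
have hkK : (k <= K)%N by apply: leq_trans hK; apply: leq_maxr.
case: (ltnP (mdeg mm) e) => hlt.
  by apply: (ipi_le _ (hK0 K hK0' mm hlt)); apply: leq_addl.
have he : mdeg mm = e by apply/eqP; rewrite eqn_leq hlt andbT -ltnS.
pose A := Pk K \mPo trans.
pose Pe := \sum_(m <- msupp A | mdeg m == e) A@_m *: ('X_[m] : {mpoly R[nV]}).
have coefPe : Pe@_mm = A@_mm.
  rewrite /Pe coef_sumX; case: (boolP (mm \in msupp A)) => hm.
    rewrite big_mkcond (bigD1_seq mm) //= he !eqxx /= big1 ?addr0 // => m' hne.
    by case: ifP => // /andP [_ /eqP e']; move: hne; rewrite e' eqxx.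
  rewrite (memN_msupp_eq0 hm) big1_seq // => m' /andP [/andP [_ /eqP e'] hm'].
  by move: hm; rewrite -e' hm'.
rewrite -coefPe; apply: (@vanish_k nV (fun _ => True)).
  by move=> W; exists W; split => // i; rewrite subrr; apply: ipi_zero.
move=> W _; have [Z hZ] := lin_surj W.
have tN : (N <= t)%N by apply: leq_addr.
have : forall kk, exists w : R,
    (Tf (enum_val kk)).@[fun i => P ^+ t * Z i] = jb kk + P ^+ s * (W kk + P ^+ k' * w).
  move=> kk; have [w hw] := T_small Z kk tN; exists w; rewrite hw -hZ.
  by rewrite /s /t addKn.
case/fin_all_exists => w hw.
pose u := fun kk => W kk + P ^+ k' * w kk.
have hQ := Q_all K (fun i => P ^+ t * Z i).
rewrite Q_eval (meval_eq _ hw) in hQ.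
have : ipi K (A.@[fun kk => P ^+ s * u kk]).
  by rewrite Pt_eval; move: hQ; congr (ipi K _); apply: meval_eq => kk; rewrite addrC.
move/(ipi_le hkK); rewrite mevalE (bigID (fun m => mdeg m < e)%N) /=.
rewrite [X in _ + X](bigID (fun m => mdeg m == e)) /=.
move=> h; have h1 : ipi k (\sum_(m <- msupp A | (mdeg m < e)%N) A@_m * \prod_i (P ^+ s * u i) ^+ m i).
  by apply: ipi_sumP => m hm; apply: ipiMr; apply: hK0.
have h2 : ipi k (\sum_(m <- msupp A | ~~ (mdeg m < e)%N && (mdeg m != e))
        A@_m * \prod_i (P ^+ s * u i) ^+ m i).
  apply: ipi_sumP => m /andP [hm1 hm2]; apply: ipiMl; rewrite prod_scale; apply: ipiPl.
  have : (e.+1 <= mdeg m)%N by rewrite ltn_neqAle eq_sym hm2 leqNgt hm1.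
  move=> hd; apply: (leq_trans _ (leq_mul (leqnn s) hd)).
  by rewrite /k /s /t; lia.
have h3 : ipi k (\sum_(m <- msupp A | ~~ (mdeg m < e)%N && (mdeg m == e))
        A@_m * \prod_i (P ^+ s * u i) ^+ m i).
  have := ipiB (ipiB h h1) h2.
  by have -> : forall a b c : R, a + (b + c) - a - c = b by move=> *; ring.
have ePe : \sum_(m <- msupp A | ~~ (mdeg m < e)%N && (mdeg m == e))
        A@_m * \prod_i (P ^+ s * u i) ^+ m i = P ^+ (s * e) * Pe.@[u].
  rewrite /Pe raddf_sum /= mulr_sumr; apply: eq_big.
    by move=> m; case: eqP => [->|]; rewrite ?ltnn ?andbT ?andbF.
  move=> m /andP [_ /eqP hme]; rewrite mevalZ mevalX prod_scale hme; ring.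
rewrite ePe in h3; move: (ipi_cancel h3) => h4.
have h5 := meval_cong Pe (y := u) (W := W) (k := k').
have := ipiB h4 (h5 _); rewrite opprB addrC subrK; apply.
by move=> i; rewrite /u addrC addKr; apply: ipiP.
Qed.

End Core.

Section Final.
Variable f : monom r M -> R.
Hypothesis hres : restricted p f.
Hypothesis hball : forall c : 'I_M -> R,
  eval_to p f (jet delta (fun i => b i + P ^+ N * c i)) 0.

Definition mn (al : monom r M) : 'X_{1..nV} := [multinom al (enum_val i) | i < nV].
Definition Pol (s : seq (monom r M)) : {mpoly R[nV]} := \sum_(al <- s) f al *: 'X_[mn al].

Lemma Pol_eval s (y : V -> R) :
  (Pol s).@[fun k => y (enum_val k)] = \sum_(al <- s) f al * monom_eval al y.
Proof.
rewrite /Pol raddf_sum /=; apply: eq_bigr => al _; rewrite mevalZ mevalX; congr (_ * _).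
rewrite /monom_eval [RHS](reindex (@enum_val _ {: V})) /=.
  by apply: eq_bigr => i _; rewrite mnmE.
by exists enum_rank => x _; [apply: enum_valK | apply: enum_rankK].
Qed.

Lemma sum_sub (T : eqType) (t u : seq T) (F : T -> R) : uniq t -> uniq u ->
  {subset u <= t} -> \sum_(x <- t | x \in u) F x = \sum_(x <- u) F x.
Proof.
move=> ut uu sub; rewrite -big_filter; apply: perm_big; apply: uniq_perm.
- exact: filter_uniq.
- exact: uu.
- by move=> x; rewrite mem_filter; apply/andP/idP => [[]//|h]; split => //; apply: sub.
Qed.

Lemma trunc (sK : nat -> seq (monom r M))
  (hsK : forall K al, al \notin sK K -> ipi K (f al)) y v K :
  eval_to p f y v -> ipi K (v - \sum_(al <- undup (sK K)) f al * monom_eval al y).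
Proof.
move=> H; have [s0 hs0] := H K.
pose t := undup (s0 ++ sK K).
have ut : uniq t := undup_uniq _.
have hsub : {subset s0 <= t} by move=> x hx; rewrite mem_undup mem_cat hx.
have h := hs0 t ut hsub.
rewrite (bigID (fun al => al \in undup (sK K))) /= sum_sub // in h; last first.
- by move=> x; rewrite !mem_undup mem_cat => ->; rewrite orbT.
- exact: undup_uniq.
have h2 : ipi K (\sum_(al <- t | al \notin undup (sK K)) f al * monom_eval al y).
  by apply: ipi_sumP => al hal; apply: ipiMr; apply: hsK; rewrite -mem_undup.
by have := ipiD h h2; rewrite opprD addrA subrK.
Qed.

Lemma comp_trans_degle (mm0 : 'X_{1..nV}) : degle (mdeg mm0) ('X_[mm0] \mPo trans).
Proof.
rewrite comp_mpolyX mdegE; apply: degle_prod => i.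
have := @degleX _ 1 (tnth trans i) (mm0 i); rewrite mul1n; apply.
rewrite tnth_mktuple; apply: mpD.
  by apply: mpXm; rewrite mdeg1.
by apply: mpC; rewrite mdeg0.
Qed.

Lemma main_sec a : eval_to p f (jet delta a) 0.
Proof.
have /fin_all_exists [Tf hTf] : forall v : V, exists T, good v T := good_ex.
have hTE : forall v c, (Tf v).@[jv c] = iter v.1 delta (b v.2 + P ^+ N * c v.2).
  by move=> v c; case: (hTf v) => h _ _; apply: h.
have /fin_all_exists [sH hsH] : forall k : 'I_nV,
    exists sH : seq ('I_nV * R) * {mpoly R[nV]},
    [/\ Tf (enum_val k) = (jb k)%:MP + P ^+ N *: ('X_k + linS sH.1) + sH.2,
        forall x, x \in sH.1 -> (lev x.1 < lev k)%N & ordge 2 sH.2].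
  move=> k; case: (hTf (enum_val k)) => _ _ [s0 [H0 [e1 e2 e3]]].
  by exists (s0, H0); split => //; rewrite e1 enum_valK.
have hTD : forall k, Tf (enum_val k) = (jb k)%:MP + P ^+ N *: ('X_k + linS (sH k).1) + (sH k).2.
  by move=> k; case: (hsH k).
have hsL : forall k x, x \in (sH k).1 -> (lev x.1 < lev k)%N.
  by move=> k; case: (hsH k).
have hHL : forall k, ordge 2 (sH k).2 by move=> k; case: (hsH k).
have [sK hsK] : exists sK : nat -> seq (monom r M), forall K al, al \notin sK K -> ipi K (f al).
  exists (fun K => proj1_sig (constructive_indefinite_description _ (hres K))) => K al.
  exact: (proj2_sig (constructive_indefinite_description _ (hres K)) al).
pose uK K := undup (sK K).
pose Pk K := Pol (uK K).
have hPk : forall K c, ipi K ((Pk K \mPo Ttup Tf).@[jv c]).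
  move=> K c; rewrite Q_eval.
  pose a' := fun i => b i + P ^+ N * c i.
  rewrite (meval_eq _ (fun k => hTE (enum_val k) c)).
  have := trunc hsK K (hball c); rewrite sub0r => /ipiN; rewrite opprK -Pol_eval.
  by congr (ipi K _); apply: meval_eq.
move=> k.
pose D := (\max_(al <- uK k) (mdeg (mn al)).+1)%N.
have [K0 hK0] := core hTD hsL hHL hPk D k.
pose K := maxn K0 k.
exists (uK K) => t ut hsub.
rewrite (bigID (fun al => al \in uK K)) /= sum_sub //; last exact: undup_uniq.
rewrite sub0r; apply: ipiN; apply: ipiD; last first.
  apply: ipi_sumP => al hal; apply: ipiMr; apply: (ipi_le (leq_maxr K0 k)); apply: hsK.
  by rewrite -mem_undup.
rewrite -Pol_eval -/(Pk K).
have -> : (Pk K).@[fun kk => jet delta a (enum_val kk)] =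
    (Pk K \mPo trans).@[fun kk => jet delta a (enum_val kk) - jb kk].
  by rewrite Pt_eval; apply: meval_eq => kk; rewrite subrK.
rewrite mevalE; apply: ipi_sum => mm _; apply: ipiMr.
case: (ltnP (mdeg mm) D) => hD.
  by apply: hK0 => //; apply: leq_maxl.
rewrite /Pk /Pol rmorph_sum /= raddf_sum /=; apply: ipi_sum => al _.
rewrite comp_mpolyZ mcoeffZ.
case: (boolP (al \in uK k)) => hal.
  rewrite memN_msupp_eq0 ?mulr0; first exact: ipi_zero.
  apply/negP => hm; have := comp_trans_degle hm.
  have : (mdeg (mn al) < D)%N.
    by rewrite /D (big_rem al hal) /= leq_max ltnSn.
  by move=> h1 h2; move: (leq_ltn_trans h2 h1); rewrite ltnNge hD.
by apply: ipiMr; apply: hsK; rewrite -mem_undup.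
Qed.

End Final.

End Jets.

End Val.

Theorem lemma3p10 (p : nat) (R : idomainType)
  (phi : {rmorphism R -> R}) (delta : R -> R) (m r : nat)
  (f : monom r m -> R) (b : 'I_m -> R) (N : 'I_m -> nat) :
  prime p -> odd p -> witt_ring p R -> frob_lift p phi ->
  is_delta p phi delta -> restricted p f ->
  (forall a : 'I_m -> R, (forall i, in_pow_ideal p (N i) (a i - b i)) ->
     eval_to p f (jet delta a) 0) ->
  forall a : 'I_m -> R, eval_to p f (jet delta a) 0.
Proof.
move=> pp _ Hw Hf Hd hres H a.
pose n0 := (\max_(i < m) N i)%N.
apply: (@main_sec p R phi delta pp Hw Hf Hd r m n0 b f hres) => c.
apply: H => i; rewrite addrC addKr.
by apply: ipiPl; apply: (@leq_bigmax_cond _ _ _ i).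
Qed.
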